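(* Let $X\in[0,1]^{N\times N}$ satisfy $\|D^TX\|_0+\|XD\|_0\leq s$ for some $s<2N^2$. Let $Q_{2D}(X)$ be the two-dimensional first-order $\Sigma\Delta$ quantization of $X$ with an alphabet of step size $\delta$, whose state matrix $u$ satisfies $X-Q_{2D}(X)=DuD^T$ and $\|u\|_{\max}\leq\delta/2$. Let $\hat X$ be a solution to $$\min_{Z\in\mathbb{R}^{N\times N}}\|D^TZ\|_1+\|ZD\|_1\quad\text{subject to}\quad\|D^{-1}(Z-Q_{2D}(X))(D^{-1})^T\|_{\max}\leq\delta/2.$$ Then $\|\hat X-X\|_F\leq C\sqrt{s}\,\delta$ for some absolute constant $C$.
   Context: $D$ is the $N\times N$ matrix with $1$ on the diagonal, $-1$ on the subdiagonal, $0$ elsewhere. For matrices, $\|\cdot\|_1$ is the entrywise $\ell_1$ norm, $\|\cdot\|_0$ the number of nonzero entries, $\|\cdot\|_{\max}$ the largest absolute entry. The two-dimensional first-order $\Sigma\Delta$ quantization with a finite alphabet $\mathcal{A}$ (step size $\delta$): with $u_{i,0}=u_{0,j}=0$, for $i,j\geq1$ set $q_{i,j}=Q_{\mathcal{A}}(u_{i,j-1}+u_{i-1,j}-u_{i-1,j-1}+X_{i,j})$ and $u_{i,j}=u_{i,j-1}+u_{i-1,j}-u_{i-1,j-1}+X_{i,j}-q_{i,j}$, where $Q_{\mathcal{A}}(z)$ is a nearest element of $\mathcal{A}$ to $z$; then $Q_{2D}(X)=q$ and $X-q=DuD^T$. The alphabet is assumed such that the scheme is stable with $\|u\|_{\max}\leq\delta/2$.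 *)

(* Defs.v *)
From HB Require Import structures.
From mathcomp Require Import all_boot all_order all_algebra.
From mathcomp Require Import reals.
Set Implicit Arguments. Unset Strict Implicit. Unset Printing Implicit Defensive.
Import Order.TTheory GRing.Theory Num.Theory.
Local Open Scope ring_scope.

Section Defs.
Variable R : realType.

Definition Dmx (N : nat) : 'M[R]_N :=
  \matrix_(i, j) (if i == j :> nat then 1 else if i == (j.+1) :> nat then -1 else 0).

Definition mxl1 m n (A : 'M[R]_(m, n)) : R := \sum_i \sum_j `|A i j|.
Definition mxl0 m n (A : 'M[R]_(m, n)) : nat := #|[set ij : 'I_m * 'I_n | A ij.1 ij.2 != 0]|.
Definition mxmax m n (A : 'M[R]_(m, n)) : R := \big[Num.max/0]_i \big[Num.max/0]_j `|A i j|.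
Definition mxfrob m n (A : 'M[R]_(m, n)) : R := Num.sqrt (\sum_i \sum_j (A i j) ^+ 2).

(* 1-indexed access to a matrix, 0 outside the index range *)
Definition mxfun N (A : 'M[R]_N) (i j : nat) : R :=
  match (insub i.-1 : option 'I_N), (insub j.-1 : option 'I_N) with
  | Some i', Some j' => A i' j'
  | _, _ => 0
  end.

(* state u_{i,j} of the 2D first-order Sigma-Delta scheme, 1-indexed,
   u_{i,0} = u_{0,j} = 0 *)
Fixpoint sd_u (Q : R -> R) (x : nat -> nat -> R) (i : nat) : nat -> R :=
  match i with
  | 0 => fun _ => 0
  | i'.+1 =>
      let prev := sd_u Q x i' in
      fix row (j : nat) : R :=
        match j with
        | 0 => 0
        | j'.+1 => let v := row j' + prev j - prev j' + x i j in v - Q v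
        end
  end.

Definition sd_q (Q : R -> R) (x : nat -> nat -> R) (i j : nat) : R :=
  Q (sd_u Q x i j.-1 + sd_u Q x i.-1 j - sd_u Q x i.-1 j.-1 + x i j).

Definition Q2D N (Q : R -> R) (X : 'M[R]_N) : 'M[R]_N :=
  \matrix_(i, j) sd_q Q (mxfun X) i.+1 j.+1.

Definition SDstate N (Q : R -> R) (X : 'M[R]_N) : 'M[R]_N :=
  \matrix_(i, j) sd_u Q (mxfun X) i.+1 j.+1.

Definition alphabet (a0 delta : R) (L : nat) : seq R :=
  mkseq (fun k => a0 + k%:R * delta) L.

Definition nearest_quantizer (A : seq R) (Q : R -> R) : Prop :=
  forall z, Q z \in A /\ forall a, a \in A -> `|z - Q z| <= `|z - a|.

Definition tv_obj N (Z : 'M[R]_N) : R := mxl1 ((Dmx N)^T *m Z) + mxl1 (Z *m Dmx N).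

Definition sd_feasible N (q : 'M[R]_N) (delta : R) (Z : 'M[R]_N) : Prop :=
  mxmax (invmx (Dmx N) *m (Z - q) *m (invmx (Dmx N))^T) <= delta / 2.

End Defs.

(* Main.v *)
Require Import Defs.
From HB Require Import structures.
From mathcomp Require Import all_boot all_order all_algebra.
From mathcomp Require Import reals.
From mathcomp Require Import ring lra zify.
Import Order.TTheory GRing.Theory Num.Theory.
Local Open Scope ring_scope.

Section Helpers.
Variable R : realType.

Lemma sum_pick (G : nat -> R) N m :
  \sum_(k < N) (if (k : nat) == m then G k else 0) = if (m < N)%N then G m else 0.
Proof.
elim: N => [|N IH]; first by rewrite big_ord0.
rewrite big_ord_recr /= IH; case: eqP => [->|E]; first by rewrite ltnn ltnSn add0r.
rewrite addr0; have -> : (m < N.+1)%N = (m < N)%N by apply/idP/idP => H; lia.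
done.
Qed.

Lemma sum_pick1 N m :
  \sum_(k < N) (if (k : nat) == m then (1:R) else 0) <= 1.
Proof. by rewrite (sum_pick (fun _ => 1)); repeat case: ifP => _; lra. Qed.

Lemma D_row N (i : 'I_N) : \sum_k `|Dmx R N i k| <= 2.
Proof.
have H : forall k : 'I_N, `|Dmx R N i k| <=
   (if (k:nat) == i then (1:R) else 0) + (if (k:nat) == i.-1 then 1 else 0).
  move=> k; rewrite mxE.
  case: (altP (i =P k :> nat)) => [E|E]; rewrite ?E ?eqxx.
    by rewrite normr1; repeat case: ifP => _; lra.
  case: (altP (i =P k.+1 :> nat)) => [E2|E2]; rewrite ?E2 /= ?eqxx.
    by rewrite normrN normr1; repeat case: ifP => _; lra.
  by rewrite normr0; repeat repeat case: ifP => _; lra.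
apply: (le_trans (ler_sum _ (fun k _ => H k))).
rewrite big_split /=.
have := sum_pick1 N i; have := sum_pick1 N i.-1; lra.
Qed.

Lemma D_col N (j : 'I_N) : \sum_k `|Dmx R N k j| <= 2.
Proof.
have H : forall k : 'I_N, `|Dmx R N k j| <=
   (if (k:nat) == j then (1:R) else 0) + (if (k:nat) == j.+1 then 1 else 0).
  move=> k; rewrite mxE.
  case: (altP (k =P j :> nat)) => [E|E]; rewrite ?E ?eqxx.
    by rewrite normr1; repeat case: ifP => _; lra.
  case: (altP (k =P j.+1 :> nat)) => [E2|E2]; rewrite ?E2 /= ?eqxx.
    by rewrite normrN normr1; repeat case: ifP => _; lra.
  by rewrite normr0; repeat repeat case: ifP => _; lra.
apply: (le_trans (ler_sum _ (fun k _ => H k))).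
rewrite big_split /=.
have := sum_pick1 N j; have := sum_pick1 N j.+1; lra.
Qed.

Lemma mulbound_l N (M A : 'M[R]_N) c (i j : 'I_N) : 0 <= c ->
  (forall i, \sum_k `|M i k| <= 2) -> (forall i j, `|A i j| <= c) ->
  `|(M *m A) i j| <= 2 * c.
Proof.
move=> c0 HM HA; rewrite mxE.
apply: (le_trans (ler_norm_sum _ _ _)).
apply: (le_trans (y := \sum_k `|M i k| * c)).
  by apply: ler_sum => k _; rewrite normrM ler_wpM2l.
by rewrite -mulr_suml ler_wpM2r.
Qed.

Lemma mulbound_r N (M A : 'M[R]_N) c (i j : 'I_N) : 0 <= c ->
  (forall j, \sum_k `|M k j| <= 2) -> (forall i j, `|A i j| <= c) ->
  `|(A *m M) i j| <= 2 * c.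
Proof.
move=> c0 HM HA; rewrite mxE.
apply: (le_trans (ler_norm_sum _ _ _)).
apply: (le_trans (y := \sum_k `|M k j| * c)).
  by apply: ler_sum => k _; rewrite normrM mulrC ler_wpM2l.
by rewrite -mulr_suml ler_wpM2r.
Qed.

Lemma l1_mul_r N (M A : 'M[R]_N) :
  (forall i, \sum_k `|M i k| <= 2) -> mxl1 (A *m M) <= 2 * mxl1 A.
Proof.
move=> HM; rewrite /mxl1 mulr_sumr; apply: ler_sum => i _.
apply: (le_trans (y := \sum_j \sum_k `|A i k| * `|M k j|)).
  apply: ler_sum => j _; rewrite mxE.
  apply: (le_trans (ler_norm_sum _ _ _)).
  by apply: ler_sum => k _; rewrite normrM.
rewrite exchange_big /= mulr_sumr; apply: ler_sum => k _.
rewrite -mulr_sumr mulrC ler_wpM2r //.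
Qed.

Lemma l0_sum m n (A : 'M[R]_(m, n)) :
  (mxl0 A)%:R = \sum_i \sum_j (if A i j != 0 then (1:R) else 0).
Proof.
rewrite /mxl0 -sum1_card natr_sum big_mkcond /=.
rewrite pair_big /=; apply: eq_bigr => [[i j]] _ /=.
by rewrite inE /=; case: ifP.
Qed.

Lemma l1_add N (A P : 'M[R]_N) c : (forall i j, `|P i j| <= c) ->
  mxl1 A + mxl1 P - 2 * c * (mxl0 A)%:R <= mxl1 (A + P).
Proof.
move=> HP; rewrite l0_sum /mxl1 mulr_sumr -!big_split -sumrB /=.
apply: ler_sum => i _; rewrite mulr_sumr -!big_split -sumrB /=.
apply: ler_sum => j _; rewrite mxE.
have := HP i j; have := ler_normD (A i j + P i j) (- P i j).
rewrite normrN addrK.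
case: eqP => [->|_] /=; rewrite ?add0r ?normr0; lra.
Qed.

Lemma tr_ident N (A W M : 'M[R]_N) :
  \sum_i \sum_j A i j * (M *m W *m M^T) i j =
  \sum_i \sum_j (M^T *m A *m M) i j * W i j.
Proof.
have E : forall B C : 'M[R]_N, \sum_i \sum_j B i j * C i j = \tr (B *m C^T).
  move=> B C; rewrite /mxtrace; apply: eq_bigr => i _; rewrite mxE.
  by apply: eq_bigr => j _; rewrite mxE.
rewrite !E !trmx_mul trmxK !mulmxA.
by rewrite mxtrace_mulC !mulmxA.
Qed.

Lemma mxmax_ge m n (A : 'M[R]_(m, n)) i j : `|A i j| <= mxmax A.
Proof.
apply: le_trans (le_bigmax _ (fun j => `|A i j|) j) _.
exact: (le_bigmax _ (fun i => \big[Num.max/0]_j `|A i j|) i).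
Qed.

Lemma D_unit N : Dmx R N \in unitmx.
Proof.
rewrite unitmxE det_trig.
  by rewrite big1 ?unitr1 // => i _; rewrite mxE eqxx.
apply/is_trig_mxP => i j H; rewrite mxE.
have -> : ((i : nat) == j) = false by apply/eqP; lia.
have -> : ((i : nat) == j.+1) = false by apply/eqP; lia.
done.
Qed.

Lemma DmulE N (A : 'M[R]_N) (F : nat -> nat -> R) :
  (forall i j : 'I_N, A i j = F i.+1 j.+1) -> (forall j, F 0%N j = 0) ->
  forall i j, (Dmx R N *m A) i j = F i.+1 j.+1 - F i j.+1.
Proof.
move=> HA HF i j; rewrite mxE.
under eq_bigr => k _ do rewrite HA.
pose G := fun k : nat => if (0 < i)%N then F k.+1 j.+1 else 0.
transitivity (\sum_(k < N) ((if (k:nat) == i then F k.+1 j.+1 else 0)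
     - (if (k:nat) == i.-1 then G k else 0))).
  apply: eq_bigr => k _; rewrite mxE /G.
  case: (altP (i =P k :> nat)) => [E|E].
    rewrite -E eqxx mul1r.
    case: ifP => [/eqP H|]; last by rewrite subr0.
    have -> : (0 < i)%N = false by lia.
    by rewrite subr0.
  have -> : ((k:nat) == i) = false by apply/eqP => H; move: E; rewrite H eqxx.
  case: (altP (i =P k.+1 :> nat)) => [E2|E2].
    by rewrite E2 /= eqxx mulN1r add0r.
  rewrite mul0r sub0r.
  case: ifP => [/eqP H|]; last by rewrite oppr0.
  have -> : (0 < i)%N = false by lia.
  by rewrite oppr0.
rewrite sumrB (sum_pick (fun k => F k.+1 j.+1)) sum_pick ltn_ord /G; clear G.
case: i => [[|i]] Hi /=; first by rewrite HF; case: ifP.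
by rewrite (ltn_trans (ltnSn i) Hi).
Qed.

Lemma sd_uS (Q : R -> R) x i j :
  sd_u Q x i.+1 j.+1 =
  (sd_u Q x i.+1 j + sd_u Q x i j.+1 - sd_u Q x i j + x i.+1 j.+1) -
  Q (sd_u Q x i.+1 j + sd_u Q x i j.+1 - sd_u Q x i j + x i.+1 j.+1).
Proof. by []. Qed.

Lemma sd_u0 (Q : R -> R) x i : sd_u Q x i 0 = 0.
Proof. by case: i. Qed.

Lemma mxfunE N (X : 'M[R]_N) (i j : 'I_N) : mxfun X i.+1 j.+1 = X i j.
Proof. by rewrite /mxfun /= !valK. Qed.

Lemma step1 N (Q : R -> R) (X : 'M[R]_N) :
  X - Q2D Q X = Dmx R N *m SDstate Q X *m (Dmx R N)^T.
Proof.
set Fu := sd_u Q (mxfun X).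
have H1 : forall l k : 'I_N, (Dmx R N *m SDstate Q X) l k = Fu l.+1 k.+1 - Fu l k.+1.
  by apply: DmulE => [i j|j]; rewrite ?mxE.
have H2 := DmulE N (Dmx R N *m SDstate Q X)^T
   (fun a b => Fu b a - Fu b.-1 a).
apply/matrixP => i j.
have -> : Dmx R N *m SDstate Q X *m (Dmx R N)^T =
   (Dmx R N *m (Dmx R N *m SDstate Q X)^T)^T by rewrite trmx_mul trmxK.
rewrite [RHS]mxE H2 /=; first last.
- by move=> b; rewrite /Fu !sd_u0 subr0.
- by move=> k l; rewrite mxE H1.
rewrite !mxE /sd_q !succnK /Fu sd_uS -/Fu mxfunE.
ring.
Qed.

Lemma subE m n (A B : 'M[R]_(m, n)) i j : (A - B) i j = A i j - B i j.
Proof. by rewrite !mxE. Qed.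

Lemma main (N s : nat) (X : 'M[R]_N) (delta : R) (Q : R -> R) (Xhat : 'M[R]_N) :
    (mxl0 ((Dmx R N)^T *m X) + mxl0 (X *m Dmx R N) <= s)%N ->
    0 < delta ->
    mxmax (SDstate Q X) <= delta / 2 ->
    sd_feasible (Q2D Q X) delta Xhat ->
    (forall Z : 'M[R]_N, sd_feasible (Q2D Q X) delta Z -> tv_obj Xhat <= tv_obj Z) ->
    mxfrob (Xhat - X) <= 6 * Num.sqrt (s%:R) * delta.
Proof.
move=> Hs Hd HU Hfe Hopt.
set D := Dmx R N. set Di := invmx D. set U := SDstate Q X. set q := Q2D Q X.
have DU := D_unit N.
move: Hfe; rewrite /sd_feasible -/D -/Di -/q => Hfe.
have S1 : X - q = D *m U *m D^T by apply: step1.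
have S2 : Di *m (X - q) *m Di^T = U.
  rewrite S1 !mulmxA mulVmx // mul1mx -!mulmxA -trmx_mul mulVmx // trmx1 mulmx1 //.
set W := Di *m (Xhat - X) *m Di^T.
have HW : forall i j, `|W i j| <= delta.
  have -> : W = Di *m (Xhat - q) *m Di^T - Di *m (X - q) *m Di^T.
    by rewrite -mulmxBl -mulmxBr opprB addrA subrK.
  move=> i j; rewrite S2 subE.
  have h1 := le_trans (mxmax_ge _ _ (Di *m (Xhat - q) *m Di^T) i j) Hfe.
  have h2 := le_trans (mxmax_ge _ _ U i j) HU.
  have := ler_normB ((Di *m (Xhat - q) *m Di^T) i j) (U i j).
  lra.
have HV : Xhat - X = D *m W *m D^T.
  rewrite /W !mulmxA mulmxV // mul1mx -!mulmxA -trmx_mul mulmxV // trmx1 mulmx1 //.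
have d0 : 0 <= delta by lra.
have DrT : forall i, \sum_k `|D^T i k| <= 2.
  by move=> i; under eq_bigr => k _ do rewrite mxE; apply: D_col.
have DcT : forall j, \sum_k `|D^T k j| <= 2.
  by move=> j; under eq_bigr => k _ do rewrite mxE; apply: D_row.
have HV1 : forall i j, `|(Xhat - X) i j| <= 2 * (2 * delta).
  move=> i j; rewrite HV; apply: mulbound_r => //.
  - by rewrite mulr_ge0.
  - by move=> k l; apply: mulbound_l => //; apply: D_row.
have HP : forall i j, `|(D^T *m (Xhat - X)) i j| <= 2 * (2 * (2 * delta)).
  move=> i j; apply: mulbound_l => //; by rewrite !mulr_ge0.
have HQ : forall i j, `|((Xhat - X) *m D) i j| <= 2 * (2 * (2 * delta)).
  move=> i j; apply: mulbound_r => //; [by rewrite !mulr_ge0 | exact: D_col].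
have HXf : sd_feasible q delta X.
  by rewrite /sd_feasible -/D -/Di S2.
have Hle := Hopt X HXf.
move: Hle; rewrite /tv_obj -/D.
have E1 : D^T *m Xhat = D^T *m X + D^T *m (Xhat - X) by rewrite -mulmxDr addrC subrK.
have E2 : Xhat *m D = X *m D + (Xhat - X) *m D by rewrite -mulmxDl addrC subrK.
rewrite E1 E2.
have L1 := l1_add _ (D^T *m X) _ _ HP.
have L2 := l1_add _ (X *m D) _ _ HQ.
have Hs' : (mxl0 (D^T *m X))%:R + (mxl0 (X *m D))%:R <= s%:R :> R.
  by rewrite -natrD ler_nat.
move=> Hle.
have Hsum : mxl1 (D^T *m (Xhat - X)) + mxl1 ((Xhat - X) *m D) <= 16 * delta * s%:R.
  have h16 : 0 <= 16 * delta by lra.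
  have := ler_wpM2l h16 Hs'.
  lra.
have l1ge0 : forall A : 'M[R]_N, 0 <= mxl1 A.
  by move=> A; apply: sumr_ge0 => i _; apply: sumr_ge0 => j _.
have Hsq : \sum_i \sum_j (Xhat - X) i j ^+ 2 <= 32 * delta ^+ 2 * s%:R.
  have -> : \sum_i \sum_j (Xhat - X) i j ^+ 2 =
      \sum_i \sum_j (Xhat - X) i j * (D *m W *m D^T) i j.
    by apply: eq_bigr => i _; apply: eq_bigr => j _; rewrite expr2 {2}HV.
  rewrite tr_ident.
  apply: (le_trans (y := delta * mxl1 (D^T *m (Xhat - X) *m D))).
    rewrite /mxl1 mulr_sumr; apply: ler_sum => i _; rewrite mulr_sumr; apply: ler_sum => j _.
    apply: (le_trans (real_ler_norm _)); first by apply: num_real.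
    by rewrite normrM mulrC ler_wpM2r.

  have := l1_mul_r _ D (D^T *m (Xhat - X)) (@D_row N).
  have := l1ge0 ((Xhat - X) *m D).
  have := l1ge0 (D^T *m (Xhat - X) *m D).
  move=> a1 a2 a3.
  have := ler_wpM2l d0 a3.
  have := ler_wpM2l d0 Hsum.
  rewrite expr2. nra.
rewrite /mxfrob.
have s0 : 0 <= s%:R :> R by apply: ler0n.
apply: (le_trans (y := Num.sqrt ((6 * delta) ^+ 2 * s%:R))).
  rewrite ler_sqrt; last by rewrite mulr_ge0 // sqr_ge0.
  apply: (le_trans Hsq); rewrite expr2 -!mulrA; nra.
rewrite sqrtrM ?sqr_ge0 // sqrtr_sqr ger0_norm; last by lra.
by rewrite mulrAC.
Qed.

End Helpers.

Theorem theorem3 (R : realType) :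
  exists C : R, 0 < C /\
  forall (N s : nat) (X : 'M[R]_N) (delta a0 : R) (L : nat) (Q : R -> R) (Xhat : 'M[R]_N),
    (forall i j, 0 <= X i j <= 1) ->
    (mxl0 ((Dmx R N)^T *m X) + mxl0 (X *m Dmx R N) <= s)%N ->
    (s < 2 * N ^ 2)%N ->
    0 < delta ->
    nearest_quantizer (alphabet a0 delta L) Q ->
    mxmax (SDstate Q X) <= delta / 2 ->
    sd_feasible (Q2D Q X) delta Xhat ->
    (forall Z : 'M[R]_N, sd_feasible (Q2D Q X) delta Z -> tv_obj Xhat <= tv_obj Z) ->
    mxfrob (Xhat - X) <= C * Num.sqrt (s%:R) * delta.
Proof.
exists 6; split; first by rewrite ltr0n.
move=> N s X delta a0 L Q Xhat _ Hs _ Hd _ HU Hfe Hopt.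
exact (@main R N s X delta Q Xhat Hs Hd HU Hfe Hopt).
Qed.
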